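(* For every integer $n \geq 6$, there exists a superpermutation on $n$ symbols whose length is strictly less than $\sum_{i=1}^{n} i!$. In particular, for $n=6$ there exists a superpermutation on the symbols $1,2,\dots,6$ of length $872 < 873 = \sum_{i=1}^{6} i!$.
   Context: Let $n \geq 1$ and take the symbols to be $1,2,\dots,n$. A superpermutation on $n$ symbols is a finite string over the alphabet $\{1,\dots,n\}$ that contains each of the $n!$ permutations of $1,\dots,n$ (each written as a string of length $n$ in which every symbol occurs exactly once) as a contiguous substring. The length of a superpermutation is the number of symbols in the string. *)

(* Defs.v *)
From mathcomp Require Import all_boot.
Set Implicit Arguments. Unset Strict Implicit. Unset Printing Implicit Defensive.

Definition is_string_on (n : nat) (s : seq nat) : bool :=
  all (fun x => (1 <= x) && (x <= n)) s.

Definition is_perm_word (n : nat) (p : seq nat) : bool :=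
  perm_eq p (iota 1 n).

Definition superperm (n : nat) (s : seq nat) : Prop :=
  is_string_on n s /\ forall p : seq nat, is_perm_word n p -> infix p s.

Definition sum_fact (n : nat) : nat := \sum_(1 <= i < n.+1) i`!.

(* Main.v *)
Require Import Defs.
From mathcomp Require Import all_boot.
From mathcomp Require Import zify.
Set Implicit Arguments. Unset Strict Implicit. Unset Printing Implicit Defensive.

Definition win (n : nat) (u : seq nat) := drop (size u - n) u.
Definition ins (n x : nat) (u : seq nat) (c : nat) : seq nat :=
  let w := win n (rcons u c) in
  if is_perm_word n w && ~~ infix w u then x :: w else [::].
Fixpoint extA (n x : nat) (u s : seq nat) : seq nat :=
  match s with
  | [::] => [::]
  | c :: s' => c :: ins n x u c ++ extA n x (rcons u c) s'
  end.
Definition E n x s := extA n x [::] s.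

Lemma extA_cat n x u s1 s2 :
  extA n x u (s1 ++ s2) = extA n x u s1 ++ extA n x (u ++ s1) s2.
Proof.
elim: s1 u => [|c s1 IH] u /=; first by rewrite cats0.
by rewrite IH -catA cat_rcons.
Qed.

Lemma E_rcons n x u c : E n x (rcons u c) = E n x u ++ c :: ins n x u c.
Proof. by rewrite /E -cats1 extA_cat /= cats0. Qed.

Lemma suffix_shorter (v w s : seq nat) :
  suffix v s -> suffix w s -> size v <= size w -> suffix v w.
Proof.
rewrite /suffix !prefixE => /eqP hv /eqP hw le.
rewrite -hw !size_rev take_takel ?size_rev //; move: hv; rewrite size_rev => ->; exact: eqxx.
Qed.

Lemma perm_word_size n w : is_perm_word n w -> size w = n.
Proof. by move/perm_size; rewrite size_iota. Qed.

Lemma E_suffix n x u v : suffix v u -> size v <= n -> suffix v (E n x u).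
Proof.
elim/last_ind: u v => [|u c IH] v.
  by move=> h _.
case/lastP: v => [|v' c'] ; first by move=> *; apply: suffix0s.
rewrite suffix_rcons => /andP[/eqP-> sv'] sz.
rewrite E_rcons /ins; case: ifP => [/andP[hp _]|_].
  have -> : E n x u ++ [:: c, x & win n (rcons u c)] =
            (E n x u ++ [:: c; x]) ++ win n (rcons u c) by rewrite -catA.
  apply: suffix_catr; apply: (@suffix_shorter _ _ (rcons u c)).
  - by rewrite suffix_rcons eqxx.
  - exact: suffix_drop.
  - by rewrite (perm_word_size hp).
rewrite cats1 suffix_rcons eqxx /=; apply: IH => //.
by move: sz; rewrite size_rcons; lia.
Qed.

Lemma E_suffix_rcons n x u c v :
  suffix v (rcons u c) -> size v <= n -> suffix v (rcons (E n x u) c).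
Proof.
case/lastP: v => [|v' c']; first by move=> *; apply: suffix0s.
rewrite !suffix_rcons => /andP[/eqP-> sv'] sz; rewrite eqxx /=.
by apply: E_suffix => //; move: sz; rewrite size_rcons; lia.
Qed.

Lemma count_or_eq (w : seq nat) (a : pred (seq nat)) (s : seq (seq nat)) :
  uniq s -> count (fun p => (w == p) || a p) s = count a s + ((w \in s) && ~~ a w).
Proof.
elim: s => //= y s IH /andP[ny us]; rewrite IH // in_cons.
case: (eqVneq w y) => [ewy|ne] /=.
  rewrite ewy (negbTE ny); by case: (a y) => /=; rewrite ?addn0 ?add0n ?addnA // addnC.
by rewrite addnA.
Qed.

Definition Pn n := permutations (iota 1 n).

Lemma E_size n x u : 0 < n ->
  size (E n x u) = size u + n.+1 * count (fun p => infix p u) (Pn n).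
Proof.
move=> n0; elim/last_ind: u => [|u c IH].
  rewrite /= (@eq_in_count _ _ pred0) ?count_pred0 ?muln0 //.
  move=> p; rewrite mem_permutations => /perm_word_size hp /=.
  apply/negP => /eqP hp0; move: hp; rewrite hp0 /=; lia.
rewrite E_rcons size_cat /= IH size_rcons.
have -> : count (fun p => infix p (rcons u c)) (Pn n) =
          count (fun p => (win n (rcons u c) == p) || infix p u) (Pn n).
  apply: eq_in_count => p; rewrite mem_permutations => /perm_word_size hp.
  by rewrite infix_rconsl suffixE hp.
rewrite count_or_eq ?permutations_uniq // mem_permutations /ins.
case: ifP => /= [h|_]; last by lia.
by move/andP: h => [/perm_word_size -> _]; lia.
Qed.

Lemma E_all n x (a : pred nat) u : all a u -> a x -> all a (E n x u).
Proof.
move=> + ax; elim/last_ind: u => [//|u c IH].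
rewrite all_rcons => /andP[ac au]; rewrite E_rcons all_cat (IH au) /ins /=; apply/andP; split => //.
case: ifP => //= _; apply/andP; split => //; rewrite /win.
have h : all a (rcons u c) by rewrite all_rcons; apply/andP.
by apply/allP => y /mem_drop; apply/allP.
Qed.

Lemma E_infix n u p :
  0 < n -> infix p u -> is_perm_word n p -> infix (p ++ n.+1 :: p) (E n n.+1 u).
Proof.
move=> n0 hin hp.
have ex : exists m, infix p (take m u) by exists (size u); rewrite take_size.
case: (ex_minnP ex) => m hm hmin.
case: m hm hmin => [|m'] hm hmin.
  by move: hm; rewrite take0 /= => /eqP hp0; move: (perm_word_size hp); rewrite hp0 /=; lia.
have lt : m' < size u.
  rewrite ltnNge; apply/negP => le; have := hmin m'; rewrite take_oversize //.
  by move=> /(_ hin); rewrite ltnn.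
have ni : ~~ infix p (take m' u).
  by apply/negP => /hmin; rewrite ltnn.
move: hm; rewrite (take_nth 0 lt) infix_rconsl (negbTE ni) orbF => suf.
set v := take m' u in ni suf; set c := nth 0 u m' in suf.
have wp : win n (rcons v c) = p.
  by move: suf; rewrite suffixE (perm_word_size hp) => /eqP.
have insE : ins n n.+1 v c = n.+1 :: p by rewrite /ins wp hp ni.
have ud : u = rcons v c ++ drop m'.+1 u by rewrite -(take_nth 0 lt) cat_take_drop.
rewrite ud /E extA_cat /= -/(E n n.+1 (rcons v c)) E_rcons insE.
have := E_suffix_rcons n.+1 suf (eq_leq (perm_word_size hp)).
case/suffixP => z hz.
rewrite -(cat_rcons c (E n n.+1 v)) hz -!catA.
by apply/infixP; exists z, (extA n n.+1 (rcons v c) (drop m'.+1 u)); rewrite -!catA.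
Qed.

Lemma step n s : 0 < n -> superperm n s ->
  superperm n.+1 (E n n.+1 s) /\ size (E n n.+1 s) = size s + n.+1`!.
Proof.
move=> n0 [hs hall]; split; last first.
  rewrite E_size // (@eq_in_count _ _ predT); last first.
    by move=> p; rewrite mem_permutations => /hall ->.
  by rewrite count_predT size_permutations ?iota_uniq // size_iota factS.
split.
  apply: E_all; last by rewrite /= leqnn.
  apply: sub_all hs => y /andP[-> /leqW ->].
  by [].
move=> q hq.
have xq : n.+1 \in q by rewrite (perm_mem hq) mem_iota; lia.
case/splitPr: xq hq => a b hq.
have hp : is_perm_word n (b ++ a).
  have h1 : perm_eq (n.+1 :: (b ++ a)) (n.+1 :: iota 1 n).
    apply: (@perm_trans _ (a ++ n.+1 :: b)); first by rewrite perm_sym perm_catC.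
    apply: (perm_trans hq).
    have -> : iota 1 n.+1 = iota 1 n ++ [:: n.+1].
      by have := iotaD 1 n 1; rewrite addn1 add1n.
    by rewrite perm_catC.
  by rewrite perm_cons in h1.
have := E_infix n0 (hall _ hp) hp.
move=> h; apply: infix_trans h.
by apply/infixP; exists b, a; rewrite -!catA.
Qed.

Lemma sum_factS n : sum_fact n.+1 = sum_fact n + n.+1`!.
Proof. by rewrite /sum_fact big_nat_recr. Qed.

Lemma general s0 : superperm 6 s0 -> size s0 < sum_fact 6 ->
  forall n, 6 <= n -> exists s, superperm n s /\ size s < sum_fact n.
Proof.
move=> h0 l0; elim => [|n IH] //; rewrite leq_eqVlt => /orP[/eqP <-|lt].
  by exists s0.
have [s [hs ls]] := IH lt.
have [hs' ls'] := step (n:=n) (ltn_trans (isT : 0 < 5) lt) hs.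
exists (E n n.+1 s); split => //.
by rewrite ls' sum_factS ltn_add2r.
Qed.

Lemma sf6 : sum_fact 6 = 873.
Proof. by rewrite /sum_fact unlock. Qed.

Definition sol : seq nat := [:: 1; 2; 3; 4; 5; 6; 1; 2; 3; 4; 5; 1; 6; 2; 3; 4; 5; 1; 2; 6; 3; 4; 5; 1; 2; 3; 6; 4; 5; 1; 3; 2; 6; 4; 5; 1; 3; 6; 2; 4; 5; 1; 3; 6; 4; 2; 5; 1; 3; 6; 4; 5; 2; 1; 3; 6; 4; 5; 1; 2; 3; 4; 6; 5; 1; 2; 3; 4; 1; 5; 6; 2; 3; 4; 1; 5; 2; 6; 3; 4; 1; 5; 2; 3; 6; 4; 1; 5; 2; 3; 4; 6; 1; 5; 2; 3; 4; 1; 6; 5; 2; 3; 4; 1; 2; 5; 6; 3; 4; 1; 2; 5; 3; 6; 4; 1; 2; 5; 3; 4; 6; 1; 2; 5; 3; 4; 1; 6; 2; 5; 3; 4; 1; 2; 6; 5; 3; 4; 1; 2; 3; 5; 6; 4; 1; 2; 3; 5; 4; 6; 1; 2; 3; 5; 4; 1; 6; 2; 3; 5; 4; 1; 2; 6; 3; 5; 4; 1; 2; 3; 6; 5; 4; 1; 3; 2; 6; 5; 4; 3; 1; 2; 6; 4; 5; 3; 1; 6; 2; 4; 3; 5; 1; 6; 2; 4; 3; 1; 5; 6; 2; 4; 3; 1; 6; 5; 2; 4; 3; 1; 6; 2; 5; 4; 3; 1; 6; 2; 4; 5; 3; 1; 6; 4; 2; 5; 3; 1; 4; 6; 2; 5;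 3; 1; 4; 2; 6; 5; 3; 1; 4; 2; 5; 6; 3; 1; 4; 2; 5; 3; 6; 1; 4; 2; 5; 3; 1; 6; 4; 5; 2; 3; 1; 4; 6; 5; 2; 3; 1; 4; 5; 6; 2; 3; 1; 4; 5; 2; 6; 3; 1; 4; 5; 2; 3; 6; 1; 4; 5; 2; 3; 1; 6; 4; 5; 3; 2; 1; 6; 4; 5; 3; 1; 2; 6; 4; 3; 5; 1; 2; 6; 4; 3; 1; 5; 2; 6; 4; 3; 1; 2; 5; 6; 4; 3; 2; 1; 5; 6; 4; 2; 3; 1; 5; 4; 6; 2; 3; 1; 5; 4; 2; 6; 3; 1; 5; 4; 2; 3; 6; 1; 5; 4; 2; 3; 1; 6; 5; 4; 2; 3; 1; 5; 6; 4; 2; 1; 3; 5; 6; 4; 2; 1; 5; 3; 6; 2; 4; 1; 5; 3; 6; 2; 1; 4; 5; 3; 6; 2; 1; 5; 4; 3; 6; 2; 1; 5; 3; 4; 6; 2; 1; 3; 5; 4; 6; 2; 1; 3; 4; 5; 6; 2; 1; 3; 4; 6; 5; 2; 1; 3; 4; 6; 2; 5; 1; 3; 4; 6; 2; 1; 5; 3; 6; 4; 2; 1; 5; 6; 3; 4; 2; 1; 6; 5; 3; 4; 2; 1; 6; 3; 5; 4; 2; 1; 6; 3; 4; 5; 2; 1; 6; 3; 4; 2; 5; 1; 6; 3; 4; 2; 1; 5; 6; 4; 3; 2; 5; 1; 6; 4; 3; 2; 5; 6; 1; 4; 3; 2; 5; 6; 4; 1; 3; 2; 5; 6; 4; 3;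 1; 2; 6; 5; 4; 3; 2; 1; 6; 5; 4; 3; 2; 6; 1; 5; 3; 4; 2; 6; 1; 3; 5; 4; 2; 6; 1; 3; 4; 5; 2; 6; 1; 3; 4; 2; 5; 6; 1; 3; 4; 2; 6; 5; 1; 3; 4; 2; 6; 1; 5; 3; 2; 4; 6; 5; 1; 3; 2; 4; 6; 5; 3; 1; 2; 4; 6; 3; 5; 1; 2; 4; 6; 3; 1; 5; 2; 4; 6; 3; 1; 2; 5; 4; 6; 3; 2; 1; 5; 4; 6; 3; 2; 5; 1; 4; 6; 3; 2; 5; 4; 1; 6; 3; 2; 5; 4; 6; 1; 3; 2; 5; 4; 6; 3; 1; 2; 4; 5; 6; 3; 2; 1; 4; 5; 6; 3; 2; 4; 1; 5; 6; 3; 2; 4; 5; 1; 6; 3; 2; 4; 5; 6; 1; 3; 2; 4; 5; 6; 3; 1; 2; 4; 6; 5; 3; 2; 1; 4; 6; 5; 3; 2; 4; 1; 6; 5; 3; 2; 4; 6; 1; 5; 3; 2; 6; 4; 1; 5; 3; 2; 6; 1; 4; 5; 3; 2; 6; 1; 5; 4; 3; 2; 6; 5; 1; 4; 3; 6; 2; 5; 1; 4; 3; 6; 5; 2; 1; 4; 3; 5; 6; 2; 1; 4; 3; 5; 2; 6; 1; 4; 3; 5; 2; 1; 6; 4; 3; 5; 2; 1; 4; 6; 3; 5; 2; 1; 4; 3; 6; 5; 1; 2; 4; 3; 6; 1; 5; 2; 4; 3; 6; 1; 2; 5; 4; 3; 6; 1; 2; 4; 5; 3; 6; 1; 2; 4;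 3; 5; 6; 1; 2; 4; 3; 6; 5; 1; 4; 2; 3; 5; 6; 1; 4; 2; 3; 5; 1; 6; 4; 2; 3; 5; 1; 4; 6; 2; 3; 5; 1; 4; 2; 6; 3; 5; 1; 4; 2; 3; 6; 5; 1; 4; 3; 2; 6; 5; 4; 1; 3; 6; 2; 5; 4; 1; 3; 6; 5; 2; 4; 1; 3; 5; 6; 2; 4; 1; 3; 5; 2; 6; 4; 1; 3; 5; 2; 4; 6; 1; 3; 5; 2; 4; 1; 6; 3; 5; 2; 4; 1; 3; 6; 5; 4; 2; 1; 3; 6; 5; 4; 1; 2; 3].

Lemma sol_ok : superperm 6 sol.
Proof.
split; first by vm_compute.
move=> p hp.
have h : all (fun p => infix p sol) (permutations (iota 1 6)) by vm_compute.
by move/allP: h => /(_ p); rewrite mem_permutations; apply.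
Qed.

Lemma sol_size : size sol = 872. Proof. by vm_compute. Qed.

Theorem mainTheorem1 :
  (forall n : nat, 6 <= n ->
     exists s : seq nat, superperm n s /\ size s < sum_fact n)
  /\ (exists s : seq nat, superperm 6 s /\ size s = 872)
  /\ sum_fact 6 = 873.
Proof.
split; last split.
- by apply: (general sol_ok); rewrite sol_size sf6.
- by exists sol; split; [exact: sol_ok | exact: sol_size].
- exact: sf6.
Qed.
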